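(* For every finite graph $G$, the poset $\mathrm{X}(G)$ deformation retracts (on geometric realisations) onto its subposet $\mathrm{C}(G)$.
   Context: Graphs are finite and may have loops and multiple edges. Subgraphs are edge-induced (no isolated vertices), so a subgraph is identified with a subset of $E(G)$. A core subgraph of $G$ is a proper subgraph $H$ such that each connected component of $H$ has non-trivial fundamental group and no vertex of $H$ has valence one in $H$ (separating edges are allowed). $\mathrm{X}(G)$ is the poset, under inclusion, of proper non-empty subgraphs of $G$ at least one connected component of which has non-trivial fundamental group; $\mathrm{C}(G)$ is the poset of proper core subgraphs of $G$ under inclusion. *)

(* Defs.v *)
From mathcomp Require Import all_boot.
From Stdlib Require Import Reals.

Set Implicit Arguments.
Unset Strict Implicit.
Unset Printing Implicit Defensive.

Section Graphs.

(* A finite graph: vertex type V, edge type E, each edge has two (unordered)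
   endpoints; loops (equal endpoints) and multiple edges are allowed. *)
Variables (V E : finType) (ends : E -> V * V).

Definition incident (e : E) (v : V) : bool :=
  ((ends e).1 == v) || ((ends e).2 == v).

(* Subgraphs are edge-induced: a subgraph is a subset H of E(G). *)
Definition adjH (H : {set E}) : rel V := fun u w =>
  [exists e in H, (((ends e).1 == u) && ((ends e).2 == w))
                  || (((ends e).1 == w) && ((ends e).2 == u))].

Definition vertsH (H : {set E}) : {set V} := [set v | [exists e in H, incident e v]].

Definition comp_verts (H : {set E}) (v : V) : {set V} :=
  [set w | connect (adjH H) v w].
Definition comp_edges (H : {set E}) (v : V) : {set E} :=
  [set e in H | (ends e).1 \in comp_verts H v].

(* A connected graph has non-trivial fundamental group (free of rank
   #edges - #vertices + 1) iff #vertices <= #edges. *)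
Definition comp_nontrivial (H : {set E}) (v : V) : bool :=
  #|comp_verts H v| <= #|comp_edges H v|.

(* valence of v in H; a loop contributes 2 *)
Definition valence (H : {set E}) (v : V) : nat :=
  \sum_(e in H) (((ends e).1 == v) + ((ends e).2 == v)).

Definition proper_subgraph (H : {set E}) : bool := H \proper [set: E].

Definition inX (H : {set E}) : bool :=
  [&& proper_subgraph H, H != set0 & [exists v in vertsH H, comp_nontrivial H v]].

Definition is_core (H : {set E}) : bool :=
  proper_subgraph H &&
  [forall v in vertsH H, comp_nontrivial H v && (valence H v != 1)].

Definition inC (H : {set E}) : bool := is_core H && (H != set0).

(* ---- geometric realisation of (the order complex of) a subposet P of
   ({set E}, \subset), embedded in R^{set E}: points are weight functions
   p >= 0 summing to 1 whose support lies in P and is a chain. ---- *)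

Definition Rsum (p : {set E} -> R) : R := \big[Rplus/0%R]_(S : {set E}) p S.

Definition in_real (P : pred {set E}) (p : {set E} -> R) : Prop :=
  (forall S, (0 <= p S)%R) /\ Rsum p = 1%R /\
  (forall S, (0 < p S)%R -> P S) /\
  (forall S T, (0 < p S)%R -> (0 < p T)%R -> S \subset T \/ T \subset S).

(* sup-distance on R^{set E} (induces the topology of the realisation) *)
Definition Rdist (p q : {set E} -> R) : R :=
  \big[Rmax/0%R]_(S : {set E}) Rabs (p S - q S).

(* |Q| is a (strong) deformation retract of |P|: a homotopy
   F : |P| x [0,1] -> |P|, continuous, with F(-,0) = id, F(-,1) in |Q|,
   and F(q,t) = q for q in |Q|. *)
Definition deformation_retracts_onto (P Q : pred {set E}) : Prop :=
  exists F : ({set E} -> R) -> R -> ({set E} -> R),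
    (forall p t, in_real P p -> (0 <= t <= 1)%R -> in_real P (F p t)) /\
    (forall p, in_real P p -> forall S, F p 0%R S = p S) /\
    (forall p, in_real P p -> in_real Q (F p 1%R)) /\
    (forall q t, in_real Q q -> (0 <= t <= 1)%R -> forall S, F q t S = q S) /\
    (forall p t, in_real P p -> (0 <= t <= 1)%R ->
       forall eps, (0 < eps)%R -> exists delta, (0 < delta)%R /\
         forall q s, in_real P q -> (0 <= s <= 1)%R ->
           (Rdist p q < delta)%R -> (Rabs (t - s) < delta)%R ->
           (Rdist (F p t) (F q s) < eps)%R).

End Graphs.

(* Main.v *)
Require Import Defs.
From mathcomp Require Import all_boot.
From Stdlib Require Import Reals.
From Stdlib Require Import Lra Lia Classical.
From mathcomp Require Import zify.
From mathcomp Require Import all_boot.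
From HB Require Import structures.

Set Implicit Arguments.
Unset Strict Implicit.
Unset Printing Implicit Defensive.
Section G.
Variables (V E : finType) (ends : E -> V * V).

Lemma sum_ind (W : {set V}) (x : V) : \sum_(w in W) ((x == w) : nat) = (x \in W).
Proof.
case: (boolP (x \in W)) => xW.
  rewrite (bigD1 x) //= eqxx big1 // => w /andP[_ /negbTE]; rewrite eq_sym => ->; by [].
rewrite big1 // => w wW; case: eqP => // exw; by rewrite exw wW in xW.
Qed.

Lemma verts_closed (H : {set E}) v w : v \in vertsH ends H ->
  connect (adjH ends H) v w -> w \in vertsH ends H.
Proof.
move=> vH c; rewrite -(closed_connect _ c) //.
move=> x y /existsP[e /andP[eH /orP[/andP[/eqP e1 /eqP e2]|/andP[/eqP e1 /eqP e2]]]];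
  (have -> : x \in vertsH ends H by rewrite inE; apply/existsP; exists e; rewrite eH /incident ?e1 ?e2 eqxx ?orbT);
  (have -> : y \in vertsH ends H by rewrite inE; apply/existsP; exists e; rewrite eH /incident ?e1 ?e2 eqxx ?orbT);
  by [].
Qed.

Lemma valence_pos (H : {set E}) v : v \in vertsH ends H -> 0 < valence ends H v.
Proof.
rewrite inE => /existsP[e /andP[eH inc]].
rewrite /valence (bigD1 e) //=; move: inc; rewrite /incident.
case/orP => /eqP ->; rewrite eqxx ?addnA /= ?addn1 /=; lia.
Qed.

Lemma handshake (H : {set E}) v : v \in vertsH ends H ->
  (forall w, w \in vertsH ends H -> valence ends H w != 1) ->
  comp_nontrivial ends H v.
Proof.
move=> vH hv; rewrite /comp_nontrivial.
set W := comp_verts ends H v.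
have vert : forall w, w \in W -> w \in vertsH ends H.
  by move=> w; rewrite inE => /(verts_closed vH).
have h1 : \sum_(w in W) 2 <= \sum_(w in W) valence ends H w.
  apply: leq_sum => w /vert wH.
  have := valence_pos wH; have := hv _ wH.
  by case: (valence ends H w) => [|[|n]].
have h2 : \sum_(w in W) valence ends H w = 2 * #|comp_edges ends H v|.
  rewrite /valence exchange_big /=.
  have -> : \sum_(e in H) \sum_(w in W) (((ends e).1 == w) + ((ends e).2 == w))
          = \sum_(e in H) 2 * ((ends e).1 \in W).
    apply: eq_bigr => e eH; rewrite big_split /= !sum_ind.
    have adj : adjH ends H (ends e).1 (ends e).2.
      apply/existsP; exists e; by rewrite eH !eqxx.
    have adj' : adjH ends H (ends e).2 (ends e).1.
      apply/existsP; exists e; by rewrite eH !eqxx orbT.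
    have -> : ((ends e).2 \in W) = ((ends e).1 \in W).
      rewrite !inE; apply/idP/idP => c.
        exact: connect_trans c (connect1 adj').
      exact: connect_trans c (connect1 adj).
    by rewrite addnn -mul2n.
  rewrite -big_distrr /=; congr (2 * _).
  rewrite -sum1_card big_mkcond /= [RHS]big_mkcond /=.
  apply: eq_bigr => e _; rewrite !inE; by case: (e \in H); case: ((ends e).1 \in W).
move: h1; rewrite h2 sum_nat_const mulnC leq_pmul2l //.
Qed.

Lemma core_of_val (H : {set E}) : proper_subgraph H ->
  (forall v, v \in vertsH ends H -> valence ends H v != 1) -> is_core ends H.
Proof.
move=> pH hv; rewrite /is_core pH /=; apply/forallP => v; apply/implyP => vH.
by rewrite handshake // hv.
Qed.


Lemma valence_le (K H : {set E}) v : K \subset H -> valence ends K v <= valence ends H v.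
Proof.
move=> sKH; rewrite /valence [X in _ <= X](big_setID K) /= (setIidPr sKH); exact: leq_addr.
Qed.

Lemma exists_core_sub n : forall K : {set E}, #|K| <= n -> K != set0 ->
  #|vertsH ends K| <= #|K| ->
  exists K' : {set E}, [/\ K' \subset K, K' != set0 &
     forall v, v \in vertsH ends K' -> valence ends K' v != 1].
Proof.
elim: n => [|n IH] K cK K0 cV.
  by move: K0; rewrite -card_gt0; case: #|K| cK.
case: (boolP [forall v in vertsH ends K, valence ends K v != 1]) => hall.
  exists K; split => // v vK; by move/forall_inP: hall => /(_ v vK).
move/forall_inPn: hall => [w wK /negPn /eqP w1].
move: (wK); rewrite inE => /existsP[e /andP[eK inc]].
pose c e' := ((ends e').1 == w) + ((ends e').2 == w).
have : valence ends K w = c e + \sum_(e' in K | e' != e) c e'.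
  by rewrite /valence (bigD1 e).
rewrite w1 => hs.
have ce : c e = 1.
  move: inc hs; rewrite /incident /c; case: ((ends e).1 == w); case: ((ends e).2 == w) => //=; lia.
have rest : forall e', e' \in K -> e' != e -> c e' = 0.
  have h0 : \sum_(e' in K | e' != e) c e' == 0 by apply/eqP; lia.
  move: h0; rewrite sum_nat_eq0 => /forallP h e' e'K ne; apply/eqP.
  by have := h e'; rewrite e'K ne.
pose u := if (ends e).1 == w then (ends e).2 else (ends e).1.
have uw : u != w.
  move: ce; rewrite /u /c; case E1: ((ends e).1 == w); case E2: ((ends e).2 == w) => //= _; by rewrite ?E1 ?E2.
have uK : u \in vertsH ends K.
  rewrite inE; apply/existsP; exists e; rewrite eK /incident /u.
  by case: ((ends e).1 == w); rewrite eqxx ?orbT.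
set K' := K :\ e.
have cK' : #|K| = (#|K'|).+1 by rewrite (cardsD1 e K) eK.
have sV : vertsH ends K' \subset vertsH ends K :\ w.
  apply/subsetP => x; rewrite !inE => /existsP[e' /andP[]]; rewrite !inE => /andP[ne e'K] ix.
  have := rest e' e'K ne; rewrite /c => h0.
  apply/andP; split; last by apply/existsP; exists e'; rewrite e'K.
  apply/negP => /eqP xw; move: ix h0; rewrite xw /incident.
  by case: ((ends e').1 == w); case: ((ends e').2 == w).
have K'0 : K' != set0.
  apply/negP => /eqP K'e; move: cK'; rewrite K'e cards0 => c1.
  have : #|[set w; u]| <= #|vertsH ends K|.
    apply: subset_leq_card; apply/subsetP => y /set2P[]->; done.
  rewrite cards2 eq_sym uw; lia.
have cV' : #|vertsH ends K'| <= #|K'|.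
  move: cV; rewrite (cardsD1 w (vertsH ends K)) wK; have := subset_leq_card sV; lia.
have [K'' [s1 s2 s3]] := IH K' ltac:(lia) K'0 cV'.
exists K''; split => //; apply: subset_trans s1 _; exact: subsetDl.
Qed.



Definition coreU (H : {set E}) : {set E} :=
  \bigcup_(K : {set E} | (K \subset H) && inC ends K) K.

Lemma coreU_sub (H : {set E}) : coreU H \subset H.
Proof. by apply/bigcupsP => K /andP[]. Qed.

Lemma coreU_mono (H Hp : {set E}) : H \subset Hp -> coreU H \subset coreU Hp.
Proof.
move=> s; apply/bigcupsP => K /andP[sK cK]; apply: bigcup_sup.
by rewrite (subset_trans sK s) cK.
Qed.

Lemma coreU_id (H : {set E}) : inC ends H -> coreU H = H.
Proof.
move=> cH; apply/eqP; rewrite eqEsubset coreU_sub /=.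
by apply: bigcup_sup; rewrite subxx cH.
Qed.

Lemma C_X (H : {set E}) : inC ends H -> inX ends H.
Proof.
case/andP => /andP[pH /forall_inP hv] H0.
rewrite /inX pH H0 /=.
case/set0Pn: H0 => e eH.
apply/existsP; exists (ends e).1; apply/andP.
have v1 : (ends e).1 \in vertsH ends H.
  by rewrite inE; apply/existsP; exists e; rewrite eH /incident eqxx.
by split => //; case/andP: (hv _ v1).
Qed.

Lemma coreU_C (H : {set E}) : inX ends H -> inC ends (coreU H).
Proof.
case/and3P => pH H0 /exists_inP[v vH nt].
set K0 := comp_edges ends H v.
have K0H : K0 \subset H by apply/subsetP => e; rewrite inE => /andP[].
have vert : vertsH ends K0 \subset comp_verts ends H v.
  apply/subsetP => x; rewrite inE => /existsP[e /andP[]]; rewrite inE => /andP[eH].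
  rewrite inE => c1; rewrite /incident => /orP[]/eqP <-; rewrite ?inE //.
  apply: connect_trans c1 (connect1 _); apply/existsP; exists e; by rewrite eH !eqxx.
have K00 : K0 != set0.
  move: vH; rewrite inE => /existsP[e /andP[eH inc]].
  apply/set0Pn; exists e; rewrite inE eH /= inE.
  move: inc; rewrite /incident => /orP[]/eqP e1.
    by rewrite e1 connect0.
  apply: connect1; apply/existsP; exists e; by rewrite eH e1 !eqxx orbT.
have cV : #|vertsH ends K0| <= #|K0|.
  apply: leq_trans (subset_leq_card vert) nt.
have [K' [s1 s2 s3]] := exists_core_sub (leqnn _) K00 cV.
have K'H : K' \subset H := subset_trans s1 K0H.
have pK' : proper_subgraph K' := sub_proper_trans K'H pH.
have cK' : inC ends K' by rewrite /inC core_of_val.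
have K'U : K' \subset coreU H by apply: bigcup_sup; rewrite K'H cK'.
have pU : proper_subgraph (coreU H) := sub_proper_trans (coreU_sub H) pH.
rewrite /inC core_of_val //=.
  apply/set0Pn; case/set0Pn: s2 => e eK; exists e; exact: (subsetP K'U).
move=> x; rewrite inE => /existsP[e /andP[/bigcupP[K /andP[sK cK] eK] inc]].
have xK : x \in vertsH ends K by rewrite inE; apply/existsP; exists e; rewrite eK.
have KU : K \subset coreU H by apply: bigcup_sup; rewrite sK cK.
have := valence_le x KU.
have := valence_pos xK.
case/andP: cK => /andP[_ /forall_inP hv] _.
have := hv _ xK => /andP[_ n1].
move: n1; case: (valence ends K x) => [|[|n]] //= _ _; case: (valence ends (coreU H) x) => [|[|m]] //.
Qed.


End G.
Lemma Rplus_assoc' : associative Rplus.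
Proof. move=> x y z; by rewrite Rplus_assoc. Qed.
HB.instance Definition _ := Monoid.isComLaw.Build R R0 Rplus Rplus_assoc' Rplus_comm Rplus_0_l.

Open Scope R_scope.

Section Real.
Variable E : finType.
Notation ST := {set E}.

Lemma sum_nonneg (h : ST -> R) : (forall S, 0 <= h S) -> 0 <= \big[Rplus/0]_(S : ST) h S.
Proof. move=> H; apply: (big_ind (fun x => 0 <= x)) => //; [lra| move=> x y; lra]. Qed.

Lemma sum_le (g h : ST -> R) : (forall S, g S <= h S) ->
  \big[Rplus/0]_(S : ST) g S <= \big[Rplus/0]_(S : ST) h S.
Proof. move=> H; apply: (big_ind2 (fun x y => x <= y)) => //; [lra| move=> x y z w; lra]. Qed.

Lemma sum_pos_ex (h : ST -> R) : 0 < \big[Rplus/0]_(S : ST) h S -> exists S, 0 < h S.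
Proof.
move=> H; apply: NNPP => N.
have : \big[Rplus/0]_(S : ST) h S <= 0.
  apply: (big_ind (fun x => x <= 0)) => //; [lra| move=> x y; lra|].
  move=> S _; apply: Rnot_lt_le => hS; apply: N; by exists S.
lra.
Qed.

Lemma sum_pick (h : ST -> R) y : \big[Rplus/0]_(T : ST) (if T == y then h T else 0) = h y.
Proof.
rewrite (bigD1 y) //= eqxx big1 ?Rplus_0_r // => T /negbTE ->; by [].
Qed.

Lemma sum_pick' (h : ST -> R) y : \big[Rplus/0]_(T : ST) (if y == T then h T else 0) = h y.
Proof.
rewrite -(sum_pick h y); apply: eq_bigr => T _; by rewrite eq_sym.
Qed.

Lemma sum_bound_abs (h : ST -> R) c :
  (forall S, Rabs (h S) <= c) ->
  Rabs (\big[Rplus/0]_(S : ST) h S) <= c * \big[Rplus/0]_(S : ST) 1.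
Proof.
move=> H; apply: (big_ind2 (fun x y => Rabs x <= c * y)).
- rewrite Rabs_R0; lra.
- move=> x1 y1 x2 y2 h1 h2; have := Rabs_triang x1 x2; lra.
- move=> S _; have := H S; lra.
Qed.

Lemma sum_diff (g h : ST -> R) :
  \big[Rplus/0]_(S : ST) g S - \big[Rplus/0]_(S : ST) h S =
  \big[Rplus/0]_(S : ST) (g S - h S).
Proof.
apply: (big_ind3 (fun x y z => x - y = z)); [lra| move=> *; lra| by []].
Qed.

Lemma Rmax_big_ge (h : ST -> R) S : h S <= \big[Rmax/0]_(T : ST) h T.
Proof.
rewrite unlock /reducebig; have : S \in index_enum ST by rewrite mem_index_enum.
elim: (index_enum ST) => //= x r IH; rewrite inE => /orP[/eqP ->|/IH h1].
  apply: Rmax_l.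
apply: Rle_trans h1 (Rmax_r _ _).
Qed.

Lemma Rmax_big_le (h : ST -> R) c : 0 <= c -> (forall S, h S <= c) ->
  \big[Rmax/0]_(T : ST) h T <= c.
Proof.
move=> c0 H; apply: (big_ind (fun x => x <= c)) => //.
by move=> x y hx hy; apply: Rmax_lub.
Qed.

Lemma Rmin_lip a b a' b' : Rabs (Rmin a b - Rmin a' b') <= Rabs (a - a') + Rabs (b - b').
Proof. unfold Rmin; repeat destruct Rle_dec; split_Rabs; lra. Qed.
Lemma Rmax_lip a b a' b' : Rabs (Rmax a b - Rmax a' b') <= Rabs (a - a') + Rabs (b - b').
Proof. unfold Rmax; repeat destruct Rle_dec; split_Rabs; lra. Qed.


Section Homotopy.
Variables (f : ST -> ST) (P Q : pred ST).
Hypotheses (f_sub : forall S : ST, f S \subset S)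
  (f_mono : forall S T : ST, S \subset T -> f S \subset f T)
  (fPQ : forall S : ST, P S -> Q (f S))
  (fQ : forall S : ST, Q S -> f S = S)
  (QP : forall S : ST, Q S -> P S).

Definition Up (p : ST -> R) (S : ST) :=
  \big[Rplus/0]_(T : ST) (if S \proper T then p T else 0).
Definition bw (p : ST -> R) s (S : ST) := Rmin (p S) (Rmax 0 (s - Up p S)).
Definition aw (p : ST -> R) s (S : ST) := p S - bw p s S.
Definition Fh (p : ST -> R) t (T : ST) :=
  \big[Rplus/0]_(S : ST) (if f S == T then aw p (1 - t) S else 0) + bw p (1 - t) T.

Lemma Up_nonneg (p : ST -> R) S : (forall T, 0 <= p T) -> 0 <= Up p S.
Proof. move=> h; apply: sum_nonneg => T; case: ifP => _; [exact: h | lra]. Qed.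

Lemma Up_bound (p : ST -> R) S : (forall T, 0 <= p T) -> Up p S + p S <= Rsum p.
Proof.
move=> h; rewrite /Up -{1}(sum_pick p S) -big_split /=; apply: sum_le => T.
case: (boolP (T == S)) => [/eqP ->|nTS]; first by rewrite properxx; have := h S; lra.
case: (S \proper T); have := h T; lra.
Qed.

Lemma Up_proper (p : ST -> R) (S T : ST) : (forall T, 0 <= p T) -> S \proper T ->
  Up p T + p T <= Up p S.
Proof.
move=> h pST; rewrite /Up -{1}(sum_pick p T) -big_split /=; apply: sum_le => W.
case: (boolP (W == T)) => [/eqP ->|nW]; rewrite ?properxx ?pST.
  have := h T; lra.
case: (boolP (T \proper W)) => pTW; last by case: ifP => _; have := h W; lra.
rewrite (proper_trans pST pTW); lra.
Qed.

Lemma bw_nonneg (p : ST -> R) s S : 0 <= p S -> 0 <= bw p s S.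
Proof. rewrite /bw; unfold Rmin, Rmax; repeat destruct Rle_dec; lra. Qed.
Lemma bw_le (p : ST -> R) s S : bw p s S <= p S.
Proof. rewrite /bw; unfold Rmin, Rmax; repeat destruct Rle_dec; lra. Qed.
Lemma aw_nonneg (p : ST -> R) s S : 0 <= p S -> 0 <= aw p s S.
Proof. rewrite /aw; have := bw_le p s S; lra. Qed.
Lemma aw_le (p : ST -> R) s S : 0 <= p S -> aw p s S <= p S.
Proof. move=> h; rewrite /aw; have := bw_nonneg s h; lra. Qed.

Lemma Fh_nonneg (p : ST -> R) t T : (forall T, 0 <= p T) -> 0 <= Fh p t T.
Proof.
move=> h; rewrite /Fh; have := bw_nonneg (1 - t) (h T).
have : 0 <= \big[Rplus/0]_(S : ST) (if f S == T then aw p (1 - t) S else 0).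
  apply: sum_nonneg => S; case: ifP => _; [exact: aw_nonneg | lra].
lra.
Qed.

Lemma Fh_sum (p : ST -> R) t : Rsum (Fh p t) = Rsum p.
Proof.
rewrite /Rsum /Fh big_split /= exchange_big /=.
have -> : \big[Rplus/0]_(S : ST) \big[Rplus/0]_(T : ST) (if f S == T then aw p (1 - t) S else 0)
   = \big[Rplus/0]_(S : ST) aw p (1 - t) S.
  apply: eq_bigr => S _; exact: sum_pick' (fun _ => aw p (1 - t) S) (f S).
rewrite -big_split /=; apply: eq_bigr => S _; rewrite /aw; lra.
Qed.

Lemma Fh_pos (p : ST -> R) t T : 0 < Fh p t T ->
  0 < bw p (1 - t) T \/ exists S, f S = T /\ 0 < aw p (1 - t) S.
Proof.
rewrite /Fh => h.
case: (Rlt_le_dec 0 (bw p (1 - t) T)) => hb; [by left|right].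
have : 0 < \big[Rplus/0]_(S : ST) (if f S == T then aw p (1 - t) S else 0) by lra.
case/sum_pos_ex => S; case: eqP => [<- h1|_]; [by exists S | lra].
Qed.

Lemma staircase (p : ST -> R) s (x y : ST) : (forall T, 0 <= p T) ->
  0 < aw p s y -> 0 < bw p s x -> x \subset y -> y \subset x.
Proof.
move=> h ha hb sxy; case: (boolP (x \proper y)) => pxy; last first.
  by move: pxy; rewrite properE sxy /= negbK.
have := Up_proper h pxy; move: ha hb; rewrite /aw /bw.
unfold Rmin, Rmax; repeat destruct Rle_dec; lra.
Qed.

Lemma mixed (p : ST -> R) s (S T : ST) : (forall T, 0 <= p T) ->
  (forall S T : ST, 0 < p S -> 0 < p T -> S \subset T \/ T \subset S) ->
  0 < aw p s S -> 0 < bw p s T -> f S \subset T.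
Proof.
move=> h hc ha hb.
have pS : 0 < p S by have := aw_le s (h S); lra.
have pT : 0 < p T by have := bw_le p s T; lra.
apply: subset_trans (f_sub S) _.
case: (hc S T pS pT) => // sTS; exact: staircase h ha hb sTS.
Qed.

Lemma Fh_real (p : ST -> R) t : in_real P p -> in_real P (Fh p t).
Proof.
case=> h [hs [hP hc]]; split; first by move=> T; exact: Fh_nonneg.
split; first by rewrite Fh_sum.
split.
  move=> T /Fh_pos [hb|[S [<- ha]]].
    apply: hP; have := bw_le p (1 - t) T; lra.
  apply: QP; apply: fPQ; apply: hP; have := aw_le (1 - t) (h S); lra.
move=> T1 T2 /Fh_pos h1 /Fh_pos h2.
case: h1 => [hb1|[S1 [<- ha1]]]; case: h2 => [hb2|[S2 [<- ha2]]].
- apply: hc; [have := bw_le p (1 - t) T1 | have := bw_le p (1 - t) T2]; lra.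
- right; exact: mixed h hc ha2 hb1.
- left; exact: mixed h hc ha1 hb2.
- have pS1 : 0 < p S1 by have := aw_le (1 - t) (h S1); lra.
  have pS2 : 0 < p S2 by have := aw_le (1 - t) (h S2); lra.
  case: (hc S1 S2 pS1 pS2) => s12; [left|right]; exact: f_mono.
Qed.

Lemma Fh0 (p : ST -> R) : in_real P p -> forall S, Fh p 0 S = p S.
Proof.
case=> h [hs _] T.
have hb : forall S, bw p (1 - 0) S = p S.
  move=> S; have := Up_bound S h; have := Up_nonneg S h; have := h S; rewrite hs /bw.
  unfold Rmin, Rmax; repeat destruct Rle_dec; lra.
rewrite /Fh hb big1 ?Rplus_0_l // => S _; case: ifP => // _; rewrite /aw hb; lra.
Qed.

Lemma Fh1 (p : ST -> R) : in_real P p -> in_real Q (Fh p 1).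
Proof.
move=> hp; have [h1 [h2 [_ h4]]] := Fh_real 1 hp.
case: hp => h [hs [hP hc]].
split => //; split => //; split => // T /Fh_pos [hb|[S [<- ha]]].
  move: hb; have := Up_nonneg T h; have := h T; rewrite /bw.
  unfold Rmin, Rmax; repeat destruct Rle_dec; lra.
apply: fPQ; apply: hP; have := aw_le (1 - 1) (h S); lra.
Qed.

Lemma FhQ (q : ST -> R) t : in_real Q q -> forall S, Fh q t S = q S.
Proof.
case=> h [hs [hQ hc]] T.
rewrite /Fh.
have -> : \big[Rplus/0]_(S : ST) (if f S == T then aw q (1 - t) S else 0)
        = \big[Rplus/0]_(S : ST) (if S == T then aw q (1 - t) S else 0).
  apply: eq_bigr => S _.
  case: (Rle_lt_or_eq_dec _ _ (aw_nonneg (1 - t) (h S))) => ha.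
    have pS : 0 < q S by have := aw_le (1 - t) (h S); lra.
    by rewrite fQ //; apply: hQ.
  by rewrite -ha; case: ifP; case: ifP.
rewrite sum_pick /aw; lra.
Qed.

Definition Mc := \big[Rplus/0]_(S : ST) (1 : R).

Lemma Mc_nonneg : 0 <= Mc.
Proof. apply: sum_nonneg => _; lra. Qed.

Lemma dist_ge (p q : ST -> R) S : Rabs (p S - q S) <= Defs.Rdist p q.
Proof. exact: (Rmax_big_ge (fun S => Rabs (p S - q S))). Qed.

Lemma dist_nonneg (p q : ST -> R) : 0 <= Defs.Rdist p q.
Proof. have := dist_ge p q set0; have := Rabs_pos (p set0 - q set0); lra. Qed.

Lemma Fh_lip (p q : ST -> R) t s :
  let d := Defs.Rdist p q in let e := Rabs (t - s) in
  let B := d + e + d * Mc in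
  Defs.Rdist (Fh p t) (Fh q s) <= (d + B) * Mc + B.
Proof.
move=> d e B.
have hd : forall S, Rabs (p S - q S) <= d := dist_ge p q.
have d0 : 0 <= d := dist_nonneg p q.
have M0 := Mc_nonneg.
have e0 : 0 <= e := Rabs_pos _.
have dU : forall S, Rabs (Up p S - Up q S) <= d * Mc.
  move=> S; rewrite /Up sum_diff; apply: sum_bound_abs => T.
  case: ifP => _; [exact: hd | rewrite Rminus_0_r Rabs_R0; lra].
have dB : forall S, Rabs (bw p (1 - t) S - bw q (1 - s) S) <= B.
  move=> S; rewrite /bw; apply: Rle_trans (Rmin_lip _ _ _ _) _.
  have := Rmax_lip 0 (1 - t - Up p S) 0 (1 - s - Up q S).
  have := hd S; have := dU S.
  have : Rabs (1 - t - Up p S - (1 - s - Up q S)) <= e + Rabs (Up p S - Up q S).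
    rewrite /e; have -> : 1 - t - Up p S - (1 - s - Up q S) = - (t - s) - (Up p S - Up q S) by ring.
    have := Rabs_triang (- (t - s)) (- (Up p S - Up q S)).
    rewrite !Rabs_Ropp /Rminus; lra.
  rewrite Rminus_0_r Rabs_R0 /B; lra.
have dA : forall S, Rabs (aw p (1 - t) S - aw q (1 - s) S) <= d + B.
  move=> S; rewrite /aw.
  have -> : p S - bw p (1 - t) S - (q S - bw q (1 - s) S)
     = (p S - q S) + - (bw p (1 - t) S - bw q (1 - s) S) by ring.
  have := Rabs_triang (p S - q S) (- (bw p (1 - t) S - bw q (1 - s) S)).
  rewrite Rabs_Ropp; have := hd S; have := dB S; lra.
have B0 : 0 <= B by rewrite /B; have := Rmult_le_pos _ _ d0 M0; lra.
apply: Rmax_big_le.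
  have := Rmult_le_pos _ _ (Rplus_le_le_0_compat _ _ d0 B0) M0; lra.
move=> T; rewrite /Fh.
have -> : forall a b c d' : R, a + b - (c + d') = (a - c) + (b - d') by move=> *; ring.
apply: Rle_trans (Rabs_triang _ _) _; apply: Rplus_le_compat; last exact: dB.
rewrite sum_diff; apply: sum_bound_abs => S; case: ifP => _; first exact: dA.
rewrite Rminus_0_r Rabs_R0; lra.
Qed.

Theorem generic_retract : deformation_retracts_onto P Q.
Proof.
exists Fh; split; first by move=> p t hp _; exact: Fh_real.
split; first exact: Fh0.
split; first exact: Fh1.
split; first by move=> q t hq _; exact: FhQ.
move=> p t _ _ eps heps.
have M0 := Mc_nonneg.
set K := (Mc + 1) * (Mc + 3).
have K0 : 0 < K by rewrite /K; nra.
exists (eps / K); split; first by apply: Rdiv_lt_0_compat.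
move=> q s _ _ hd hts.
apply: Rle_lt_trans (Fh_lip p q t s) _.
set d := Defs.Rdist p q in hd *; set e := Rabs (t - s) in hts *.
have d0 : 0 <= d := dist_nonneg p q.
have e0 : 0 <= e := Rabs_pos _.
set del := eps / K in hd hts.
have hK : del * K = eps by rewrite /del; field; lra.
have h1 : d * (Mc * Mc + 3 * Mc + 1) <= del * (Mc * Mc + 3 * Mc + 1).
  apply: Rmult_le_compat_r; nra.
have h2 : e * (Mc + 1) <= del * (Mc + 1) by apply: Rmult_le_compat_r; lra.
have h3 : 0 < del by lra.
have -> : (d + (d + e + d * Mc)) * Mc + (d + e + d * Mc)
   = d * (Mc * Mc + 3 * Mc + 1) + e * (Mc + 1) by ring.
have : del * (Mc * Mc + 3 * Mc + 1) + del * (Mc + 1) < del * K.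
  rewrite /K; nra.
lra.
Qed.

End Homotopy.
End Real.

Theorem lemma4 (V E : finType) (ends : E -> V * V) :
  deformation_retracts_onto (inX ends) (inC ends).
Proof.
apply: (@generic_retract E (coreU ends) (inX ends) (inC ends)).
- exact: coreU_sub.
- exact: coreU_mono.
- move=> S h; exact: coreU_C.
- exact: coreU_id.
- exact: C_X.
Qed.
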